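(* Let $1\le b<\frac{n}{2}-1$ and let $T$ be a tree attaining the maximum value of $M_2$ over $\mathcal{CT}^*_{n,b}$. Then $T$ contains no internal path of length greater than $1$.
   Context: A chemical tree is a tree with maximum degree at most $4$. A branching vertex is a vertex of degree greater than $2$. An internal path is a path $u_0\cdots u_r$ ($r\ge1$) whose end vertices are branching and whose internal vertices all have degree $2$; its length is $r$. $\mathcal{CT}^*_{n,b}$ is the class of all $n$-vertex chemical trees with exactly $b$ branching vertices. $M_2(G)=\sum_{uv\in E(G)}d_ud_v$, where $d_v$ is the degree of $v$. *)

(* Defs.v *)
From mathcomp Require Import all_boot.
Set Implicit Arguments. Unset Strict Implicit. Unset Printing Implicit Defensive.

Definition simple_graph (n : nat) (g : rel 'I_n) : Prop :=
  symmetric g /\ irreflexive g.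

Definition deg (n : nat) (g : rel 'I_n) (v : 'I_n) : nat := #|[set u | g v u]|.

Definition edge_set (n : nat) (g : rel 'I_n) : {set 'I_n * 'I_n} :=
  [set e : 'I_n * 'I_n | (e.1 < e.2)%N && g e.1 e.2].

Definition is_tree (n : nat) (g : rel 'I_n) : Prop :=
  [/\ simple_graph g, (forall u v : 'I_n, connect g u v) & #|edge_set g| = n.-1].

Definition chemical (n : nat) (g : rel 'I_n) : Prop :=
  forall v : 'I_n, deg g v <= 4.

Definition branching (n : nat) (g : rel 'I_n) (v : 'I_n) : bool := 2 < deg g v.

Definition num_branching (n : nat) (g : rel 'I_n) : nat :=
  #|[set v | branching g v]|.

Definition in_CTstar (n b : nat) (g : rel 'I_n) : Prop :=
  [/\ is_tree g, chemical g & num_branching g = b].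

Definition M2 (n : nat) (g : rel 'I_n) : nat :=
  \sum_(e in edge_set g) deg g e.1 * deg g e.2.

(* Internal path u0 u1 ... ur, represented by u0 = x and p = [:: u1; ...; ur]:
   r = size p >= 1, consecutive vertices adjacent, vertices distinct,
   end vertices branching, internal vertices u1..u_{r-1} of degree 2.
   Its length is r = size p. *)
Definition internal_path (n : nat) (g : rel 'I_n) (x : 'I_n) (p : seq 'I_n) : Prop :=
  [/\ (1 <= size p)%N, path g x p, uniq (x :: p),
      branching g x && branching g (last x p)
    & all (fun v => deg g v == 2) (take (size p).-1 p)].

(* Main.v *)
Require Import Defs.
From mathcomp Require Import all_boot.
From mathcomp Require Import zify.
Set Implicit Arguments. Unset Strict Implicit. Unset Printing Implicit Defensive.

Lemma deg_sum n (g : rel 'I_n) v : deg g v = \sum_b (g v b : nat).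
Proof.
rewrite /deg -sum1_card big_mkcond /=; apply: eq_bigr => b _; rewrite inE; by case: (g v b).
Qed.

Definition swp n (p : 'I_n * 'I_n) := (p.2, p.1).

Lemma double_sum n (g : rel 'I_n) (F : 'I_n -> 'I_n -> nat) :
  symmetric g -> irreflexive g -> (forall a b, F a b = F b a) ->
  \sum_a \sum_b (g a b) * F a b = 2 * \sum_(e in edge_set g) F e.1 e.2.
Proof.
move=> gs gi Fs.
rewrite pair_big /= (bigID (fun p : 'I_n * 'I_n => (p.1 < p.2)%N)) /=.
pose P2 := fun p : 'I_n * 'I_n => (p.2 < p.1)%N.
rewrite [X in _ + X](bigID P2) /= /P2.
rewrite [X in _ + (_ + X)]big1 ?addn0; last first.
  move=> [a b] /= /andP[h1 h2].
  have -> : a = b by apply/val_inj; rewrite /=; lia.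
  by rewrite gi.
have E : \sum_(e in edge_set g) F e.1 e.2 = \sum_(p : 'I_n * 'I_n | (p.1 < p.2)%N) g p.1 p.2 * F p.1 p.2.
  rewrite big_mkcond [RHS]big_mkcond; apply: eq_bigr => [[a b]] _ /=.
  rewrite inE /=; case: (a < b) => //=; by case: (g a b) => //=; rewrite mul1n.
rewrite E mul2n -addnn; congr (_ + _).
rewrite (reindex_inj (h := @swp n)) /=; last first.
  by move=> [a b] [c d] /= [-> ->].
apply: eq_big => [[a b]|[a b]] /=.
  by case: (ltngtP a b).
by move=> _; rewrite gs Fs.
Qed.

Definition e_is n (a b x y : 'I_n) : bool := ((a == x) && (b == y)) || ((a == y) && (b == x)).

Lemma sum_pick n (y : 'I_n) (G : 'I_n -> nat) : \sum_b (b == y) * G b = G y.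
Proof.
rewrite (bigD1 y) //= eqxx mul1n big1 ?addn0 // => i /negbTE ->; by [].
Qed.

Lemma e_nat n (a b x y : 'I_n) : x != y ->
  (e_is a b x y : nat) = (a == x) * (b == y) + (a == y) * (b == x).
Proof.
move=> xy; rewrite /e_is.
case: (a =P x) => [->|ax]; case: (b =P y) => [->|bY] //=.
- by rewrite (negbTE xy).
- by rewrite (negbTE xy).
- by case: (a == y); case: (y == x).
- by case: (a == y); case: (b == x).
Qed.

Lemma e_row n (a x y : 'I_n) : x != y -> \sum_b (e_is a b x y : nat) = (a == x) + (a == y).
Proof.
move=> xy; under eq_bigr => b _ do rewrite e_nat // [X in X + _]mulnC [X in _ + X]mulnC.
by rewrite big_split /= !sum_pick.
Qed.

Lemma e_dbl n (F : 'I_n -> 'I_n -> nat) (x y : 'I_n) : x != y ->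
  \sum_a \sum_b (e_is a b x y) * F a b = F x y + F y x.
Proof.
move=> xy.
under eq_bigr => a _ do under eq_bigr => b _ do
  rewrite e_nat // mulnDl [(a == x) * _]mulnC -mulnA [(a == y) * _]mulnC -mulnA.
under eq_bigr => a _ do rewrite big_split /= !sum_pick.
by rewrite big_split /= !sum_pick.
Qed.

Lemma conn_edges n (g : rel 'I_n) (r : 'I_n) : symmetric g -> (forall v, connect g v r) ->
  n.-1 <= #|edge_set g|.
Proof.
move=> gs H.
have exP v : exists k, [exists t : k.-tuple 'I_n, path g v t && (last v t == r)].
  move/connectP: (H v) => [p pp ->]; exists (size p); apply/existsP; exists (in_tuple p).
  by rewrite /= pp eqxx.
pose dist v := ex_minn (exP v).
have step v : v != r -> exists2 y, g v y & dist y < dist v.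
  move=> vr; rewrite /dist; case: ex_minnP => d /existsP [[s szt]].
  case: s szt => [|y t'] szt /=.
    by move=> /eqP vr'; rewrite vr' eqxx in vr.
  move=> /andP[/andP[gy pt] lt] _; exists y => //.
  case: ex_minnP => m _ Hm.
  have szt' : size t' == d.-1 by move/eqP: szt => <-.
  have : m <= d.-1 by apply: Hm; apply/existsP; exists (Tuple szt'); rewrite /= pt lt.
  move/eqP: szt => <- /=; lia.
pose par v := odflt v [pick y | g v y && (dist y < dist v)].
have parP v : v != r -> g v (par v) && (dist (par v) < dist v).
  move=> vr; rewrite /par; case: pickP => [y -> //|none].
  have [y gy ly] := step v vr; by move: (none y); rewrite gy ly.
pose f (v : 'I_n) : 'I_n * 'I_n := if (v < par v)%N then (v, par v) else (par v, v).
have sub : f @: [set~ r] \subset edge_set g.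
  apply/subsetP => e /imsetP [v]; rewrite !inE => vr ->.
  have /andP[gv lv] := parP v vr; rewrite /f.
  case: ifP => h /=; first by rewrite h gv.
  rewrite gs gv andbT ltn_neqAle leqNgt h andbT.
  apply/negP => /eqP ee; have e' : par v = v by apply/val_inj.
  by rewrite e' ltnn in lv.
have inj : {in [set~ r] &, injective f}.
  move=> v v'; rewrite !inE => vr vr'; rewrite /f.
  have /andP[_ lv] := parP v vr; have /andP[_ lv'] := parP v' vr'.
  case: ifP; case: ifP => _ _ [e1 e2] //.
  - by move: lv lv'; rewrite -e1 e2; lia.
  - by move: lv lv'; rewrite -e2 e1; lia.
rewrite -{1}(card_ord n) -(cardsC1 r) -(card_in_imset inj); exact: subset_leq_card.
Qed.

Lemma e_is_sym n (a b x y : 'I_n) : e_is b a x y = e_is a b x y.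
Proof. by rewrite /e_is; case: (a == x); case: (a == y); case: (b == x); case: (b == y). Qed.

Lemma e_is_refl n (a x y : 'I_n) : x != y -> e_is a a x y = false.
Proof.
move=> xy; rewrite /e_is; apply/negbTE; apply/negP => /orP[] /andP[/eqP a1 /eqP a2];
  by rewrite -a1 -a2 eqxx in xy.
Qed.

Lemma e_is_eq n (a b x y x' y' : 'I_n) : e_is a b x y ->
  e_is a b x' y' = ((x == x') && (y == y')) || ((x == y') && (y == x')).
Proof.
rewrite /e_is => /orP[] /andP[/eqP -> /eqP ->] //.
by case: (x == x'); case: (y == y'); case: (x == y'); case: (y == x').
Qed.

Lemma e_T n (T : rel 'I_n) (a b x y : 'I_n) : symmetric T -> T x y -> e_is a b x y -> T a b.
Proof. by move=> Ts Txy; rewrite /e_is => /orP[] /andP[/eqP -> /eqP ->] //; rewrite Ts. Qed.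

Lemma handshake n (g : rel 'I_n) : symmetric g -> irreflexive g ->
  \sum_v deg g v = 2 * #|edge_set g|.
Proof.
move=> gs gi.
have := @double_sum n g (fun _ _ => 1) gs gi (fun _ _ => erefl).
rewrite sum1_card => <-; apply: eq_bigr => v _; rewrite deg_sum; apply: eq_bigr => b _.
by rewrite muln1.
Qed.

Lemma no_triangle n (T : rel 'I_n) (a b c : 'I_n) : is_tree T -> T a b -> T b c -> a != c -> ~~ T a c.
Proof.
case=> [[Ts Ti] Tc Te] Tab Tbc ac; apply/negP => Tac.
have ab : a != b by apply/negP => /eqP e; rewrite e Ti in Tab.
have bc : b != c by apply/negP => /eqP e; rewrite e Ti in Tbc.
pose g0 := fun u v => T u v && ~~ e_is u v a c.
have g0s : symmetric g0 by move=> u v; rewrite /g0 Ts e_is_sym.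
have g0ab : g0 a b.
  rewrite /g0 Tab /=; apply/negP; rewrite /e_is => /orP[] /andP[/eqP e1 /eqP e2].
    by move: bc; rewrite e2 eqxx.
  by move: ac; rewrite e1 eqxx.
have g0bc : g0 b c.
  rewrite /g0 Tbc /=; apply/negP; rewrite /e_is => /orP[] /andP[/eqP e1 /eqP e2].
    by move: ab; rewrite e1 eqxx.
  by move: bc; rewrite e1 eqxx.
have cac : connect g0 a c := connect_trans (connect1 g0ab) (connect1 g0bc).
have sub : subrel T (connect g0).
  move=> u v Tuv; case h: (e_is u v a c); last by apply: connect1; rewrite /g0 Tuv h.
  move: h; rewrite /e_is => /orP[] /andP[/eqP -> /eqP ->] //.
  by rewrite (sym_connect_sym g0s).
have := conn_edges (r := a) g0s (fun v => connect_sub sub (Tc v a)).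
rewrite -Te leqNgt => /negP; apply; apply: proper_card; apply/properP; split.
  apply/subsetP => [[u v]]; rewrite !inE /g0 /= => /andP[-> /andP[-> _]] //.
exists (if (a < c)%N then (a, c) else (c, a)).
  by rewrite inE; case: ifP => h /=; rewrite ?Tac ?h // Ts Tac andbT ltn_neqAle leqNgt h andbT eq_sym; apply/negP => /eqP e; move: ac; rewrite -val_eqE /= e eqxx.
by rewrite inE /g0; case: ifP => _ /=; rewrite /e_is !eqxx ?orbT /= !andbF.
Qed.

Lemma excl n (a b x y x' y' : 'I_n) :
  ~~ (((x == x') && (y == y')) || ((x == y') && (y == x'))) ->
  (e_is a b x y + e_is a b x' y' = (e_is a b x y || e_is a b x' y'))%N.
Proof.
move=> H; case h: (e_is a b x y) => //=; rewrite (e_is_eq _ _ h).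
by move/negbTE: H => ->.
Qed.

Ltac kill := repeat (match goal with
  | H : is_true (?u != ?v) |- context[?u == ?v] => rewrite (negbTE H)
  | H : is_true (?u != ?v) |- context[?v == ?u] => rewrite (eq_sym v u) (negbTE H)
  end); rewrite ?eqxx /=;
  repeat match goal with |- context[?u == ?v] => case: (u == v) end.

Lemma pointwise n (T : rel 'I_n) (x u1 u2 w l a b : 'I_n) :
  symmetric T -> T x u1 -> T u1 u2 -> T w l -> ~~ T x u2 -> ~~ T u1 l ->
  T w u1 = (w == x) || (w == u2) ->
  x != u1 -> u1 != u2 -> x != u2 -> w != l -> l != x -> l != u1 -> l != u2 -> w != u1 ->
  (((T a b && ~~ [|| e_is a b x u1, e_is a b u1 u2 | e_is a b w l])
     || [|| e_is a b x u2, e_is a b w u1 | e_is a b u1 l]) : nat)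
  + (e_is a b x u1 + e_is a b u1 u2 + e_is a b w l)
  = T a b + (e_is a b x u2 + e_is a b w u1 + e_is a b u1 l).
Proof.
move=> Ts T01 T12 Twl N02 N1l Tw1 h01 h12 h02 hwl hl0 hl1 hl2 hw1.
have T10 : T u1 x by rewrite Ts.
have T21 : T u2 u1 by rewrite Ts.
have Tlw : T l w by rewrite Ts.
have F02 : T x u2 = false by apply/negbTE.
have F20 : T u2 x = false by rewrite Ts; apply/negbTE.
have F1l : T u1 l = false by apply/negbTE.
have Fl1 : T l u1 = false by rewrite Ts; apply/negbTE.
have T1w : T u1 w = (w == x) || (w == u2) by rewrite Ts.
move: h01 h12 h02 hwl hl0 hl1 hl2 hw1; rewrite -!(inj_eq val_inj) => h01 h12 h02 hwl hl0 hl1 hl2 hw1.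
case h0: (e_is a b x u1).
  by move: h0; move/orP=> [] /andP[/eqP-> /eqP->];
  rewrite ?T01 ?T10 ?T12 ?T21 ?Twl ?Tlw ?F02 ?F20 ?F1l ?Fl1 ?Tw1 ?T1w /e_is -!(inj_eq val_inj);
  kill.
case h1: (e_is a b u1 u2).
  by move: h1 h0; move/orP=> [] /andP[/eqP-> /eqP->];
  rewrite ?T01 ?T10 ?T12 ?T21 ?Twl ?Tlw ?F02 ?F20 ?F1l ?Fl1 ?Tw1 ?T1w /e_is -!(inj_eq val_inj);
  kill.
case h2: (e_is a b w l).
  by move: h2 h0 h1; move/orP=> [] /andP[/eqP-> /eqP->];
  rewrite ?T01 ?T10 ?T12 ?T21 ?Twl ?Tlw ?F02 ?F20 ?F1l ?Fl1 ?Tw1 ?T1w /e_is -!(inj_eq val_inj);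
  kill.
case h3: (e_is a b x u2).
  by move: h3 h0 h1 h2; move/orP=> [] /andP[/eqP-> /eqP->];
  rewrite ?T01 ?T10 ?T12 ?T21 ?Twl ?Tlw ?F02 ?F20 ?F1l ?Fl1 ?Tw1 ?T1w /e_is -!(inj_eq val_inj);
  kill.
case h4: (e_is a b w u1).
  by move: h4 h0 h1 h2 h3; move/orP=> [] /andP[/eqP-> /eqP->];
  rewrite ?T01 ?T10 ?T12 ?T21 ?Twl ?Tlw ?F02 ?F20 ?F1l ?Fl1 ?Tw1 ?T1w /e_is -!(inj_eq val_inj);
  kill.
case h5: (e_is a b u1 l).
  by move: h5 h0 h1 h2 h3 h4; move/orP=> [] /andP[/eqP-> /eqP->];
  rewrite ?T01 ?T10 ?T12 ?T21 ?Twl ?Tlw ?F02 ?F20 ?F1l ?Fl1 ?Tw1 ?T1w /e_is -!(inj_eq val_inj);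
  kill.
by rewrite /= andbT orbF.
Qed.


Lemma arith1 (X Y a b c d e : nat) :
  X + ((a + b) + (b + c) + (d + e)) = Y + ((a + c) + (d + b) + (b + e)) -> X = Y.
Proof. lia. Qed.

Lemma sum2_split n (X Y : 'I_n -> 'I_n -> nat) :
  \sum_a \sum_b (X a b + Y a b) = \sum_a \sum_b X a b + \sum_a \sum_b Y a b.
Proof. rewrite -big_split; apply: eq_bigr => a _; exact: big_split. Qed.

Lemma arith2 (M M' d0 d2 dw : nat) : 2 < d0 -> 1 < d2 -> 1 < dw ->
  2 * M' + (d0 * 2 + 2 * d0 + (2 * d2 + d2 * 2) + (dw * 1 + 1 * dw)) =
  2 * M + (d0 * d2 + d2 * d0 + (dw * 2 + 2 * dw) + (2 * 1 + 1 * 2)) ->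
  M <= M' /\ (2 < d2 -> M < M').
Proof. move=> h0 h2 hw E; split; [|move=> h2']; nia. Qed.

Lemma step n bb (T : rel 'I_n) (x u1 u2 : 'I_n) rest :
  in_CTstar bb T -> internal_path T x [:: u1, u2 & rest] ->
  exists T' : rel 'I_n, [/\ in_CTstar bb T', M2 T <= M2 T',
     (rest = [::] -> M2 T < M2 T') & (rest != [::] -> internal_path T' x (u2 :: rest))].
Proof.
case=> [[[Ts Ti] Tc Te] Tch Tb] [_ Hp U /andP[bx bl] Hall].
move: Hp => /= /andP[T01 /andP[T12 Tp]].
move: U; rewrite /= !inE !negb_or => /andP[/and3P[x1 x2 xr] /andP[/andP[u12 u1r] Ur]].
move: Hall => /= /andP[/eqP d1 Hall].
move: bl => /= bl.
have d0 : 2 < deg T x := bx.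
have d2 : 2 <= deg T u2.
  move: Hall bl; case: (rest) => [|r rr] /=; first by move=> _ /ltnW.
  by case/andP => /eqP ->.
have d2s : rest = [::] -> 2 < deg T u2 by move=> e; move: bl; rewrite e.
have d2e : rest != [::] -> deg T u2 = 2.
  by move: Hall; case: (rest) => [|r rr] //= /andP[/eqP ->].
have onp : forall v, v \in u2 :: rest -> 2 <= deg T v.
  move=> v; rewrite lastI mem_rcons inE => /orP[/eqP ->|]; first exact: ltnW.
  move: Hall; rewrite lastI -cats1 take_size_cat ?size_belast // => /allP H /H /eqP -> //.
have N1 : forall z, T u1 z -> (z == x) || (z == u2).
  have S : [set z | T u1 z] = [set x; u2].
    have d1' : #|[set z | T u1 z]| = 2 := d1.
    apply/esym/eqP; rewrite eqEcard cards2 x2 d1' andbT.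
    by apply/subsetP => z; rewrite !inE => /orP[] /eqP -> //; rewrite Ts.
  move=> z Tz; have : z \in [set z | T u1 z] by rewrite inE.
  by rewrite S !inE.
have tree : is_tree T by split.
have hs := handshake Ts Ti; rewrite Te in hs.
have n0 : 0 < n := leq_ltn_trans (leq0n x) (ltn_ord x).
have [l dl] : exists l, deg T l = 1.
  case: (boolP [exists l, deg T l < 2]) => [/existsP [l hl]|/existsPn H]; last first.
    have : \sum_(v : 'I_n) 2 <= \sum_v deg T v.
      by apply: leq_sum => v _; move: (H v); rewrite -leqNgt.
    rewrite hs sum_nat_const card_ord; clear -n0; lia.
  exists l.
  have lx : l != x by apply/negP => /eqP e; move: hl; rewrite e ltnNge (ltnW d0).
  have : 0 < deg T l.
    move/connectP: (Tc l x) => [[|y p] /=]; first by move=> _ e; rewrite e eqxx in lx.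
    by move=> /andP[Tly _] _; apply/card_gt0P; exists y; rewrite inE.
  by move=> h; apply/eqP; rewrite eqn_leq -ltnS hl h.
have /cards1P [w Sw] : #|[set z | T l z]| == 1 by apply/eqP.
have Nl : forall z, T l z = (z == w).
  by move=> z; move/setP: Sw => /(_ z); rewrite !inE.
have Tlw : T l w by rewrite Nl.
have Twl : T w l by rewrite Ts.
have lx : l != x by apply/negP => /eqP e; move: d0; rewrite -e dl.
have l1 : l != u1 by apply/negP => /eqP e; move: d1; rewrite -e dl.
have l2 : l != u2 by apply/negP => /eqP e; move: d2; rewrite -e dl.
have wl : w != l by apply/negP => /eqP e; move: Twl; rewrite e Ti.
have w1 : w != u1.
  apply/negP => /eqP e; move: Twl; rewrite e => /N1 /orP[] /eqP e'.
    by move: lx; rewrite e' eqxx.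
  by move: l2; rewrite e' eqxx.
have Tw1 : T w u1 = (w == x) || (w == u2).
  apply/idP/idP => [h|/orP[] /eqP ->]; [by apply: N1; rewrite Ts | by rewrite T01 | by rewrite Ts].
have N1l : ~~ T u1 l.
  apply/negP => /N1 /orP[] /eqP e; [by rewrite e eqxx in lx | by rewrite e eqxx in l2].
have N02 : ~~ T x u2 := no_triangle tree T01 T12 x2.
have dw : 2 <= deg T w.
  rewrite leqNgt; apply/negP => hw.
  have dw1 : deg T w = 1.
    have : 0 < deg T w by apply/card_gt0P; exists l; rewrite inE.
    by move=> h; apply/eqP; rewrite eqn_leq -ltnS hw h.
  have /cards1P [l' Sw'] : #|[set z | T w z]| == 1 by apply/eqP.
  have Nw : forall z, T w z = (z == l').
    by move=> z; move/setP: Sw' => /(_ z); rewrite !inE.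
  have ll : l' = l by move: (Nw l); rewrite Twl => /esym /eqP.
  have Nw' : forall z, T w z = (z == l) by move=> z; rewrite Nw ll.
  have cl : closed T [pred z | (z == l) || (z == w)].
    move=> a c Tac; rewrite !inE.
    case: (a =P l) => [ea|nal]; first by move: Tac; rewrite ea Nl => /eqP ->; rewrite eqxx orbT.
    case: (a =P w) => [ea|naw]; first by move: Tac; rewrite ea Nw' => /eqP ->; rewrite eqxx.
    case: (c =P l) => [ec|ncl]; first by move: Tac; rewrite ec Ts Nl => /eqP.
    case: (c =P w) => [ec|ncw] //; by move: Tac; rewrite ec Ts Nw' => /eqP.
  have := closed_connect cl (Tc l x); rewrite !inE eqxx /= => /esym /orP[] /eqP e.
    by move: lx; rewrite e eqxx.
  by move: d0; rewrite e dw1.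
pose R a b := [|| e_is a b x u1, e_is a b u1 u2 | e_is a b w l].
pose A a b := [|| e_is a b x u2, e_is a b w u1 | e_is a b u1 l].
pose T' : rel 'I_n := fun a b => (T a b && ~~ R a b) || A a b.
have PW : forall a b, (T' a b : nat) + (e_is a b x u1 + e_is a b u1 u2 + e_is a b w l)
   = T a b + (e_is a b x u2 + e_is a b w u1 + e_is a b u1 l).
  by move=> a b; apply: pointwise.
have degE : forall a, deg T' a = deg T a.
  move=> a.
  have H : \sum_b ((T' a b : nat) + (e_is a b x u1 + e_is a b u1 u2 + e_is a b w l))
         = \sum_b ((T a b : nat) + (e_is a b x u2 + e_is a b w u1 + e_is a b u1 l)).
    by apply: eq_bigr => b _; exact: PW.
  have l1' : u1 != l by rewrite eq_sym.
  rewrite !big_split /= !e_row // in H.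
  by rewrite !deg_sum; exact: arith1 H.
have T's : symmetric T'.
  by move=> a b; rewrite /T' /R /A Ts !(@e_is_sym _ a b).
have T'i : irreflexive T'.
  by move=> a; rewrite /T' /A Ti /= !e_is_refl // eq_sym.
have keep : forall a c, a != u1 -> a != l -> c != u1 -> c != l -> T a c -> T' a c.
  move=> a c h1 h2 h3 h4 Tac; rewrite /T' /R Tac /=; apply/orP; left.
  rewrite /e_is; apply/negP => /or3P[] /orP[] /andP[/eqP e1 /eqP e2].
  - by rewrite e2 eqxx in h3.
  - by rewrite e1 eqxx in h1.
  - by rewrite e1 eqxx in h1.
  - by rewrite e2 eqxx in h3.
  - by rewrite e2 eqxx in h4.
  - by rewrite e1 eqxx in h2.
have T'x2 : T' x u2 by rewrite /T' /A /e_is !eqxx /= orbT.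
have T'w1 : T' w u1 by rewrite /T' /A /e_is !eqxx /= !orbT.
have T'1l : T' u1 l by rewrite /T' /A /e_is !eqxx /= !orbT.
have UP : forall p z, path T z p -> uniq (z :: p) -> last z p = x -> z != l -> z != u1 ->
    connect T' z x.
  elim=> [|y p IH] z /=; first by move=> _ _ -> _ _; exact: connect0.
  move=> /andP[Tzy Tp'] /andP[zn Uy] lst zl zu1.
  case: (y =P u1) => [ey|nyu1].
    have : T u1 z by rewrite Ts -ey.
    move/N1 => /orP[] /eqP ez; first by rewrite ez; exact: connect0.
    by apply: connect1; rewrite ez T's.
  case: (y =P l) => [eyl|nyl].
    have zw : z = w by apply/eqP; rewrite -Nl -eyl Ts.
    move: Tp' lst zn; case: p {IH Uy} => [|y' p'] /=.
      by move=> _ e; move: lx; rewrite -e eyl eqxx.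
    move=> /andP[Ty' _] _; rewrite eyl Nl in Ty'.
    by rewrite !inE zw (eqP Ty') eqxx orbT.
  apply: connect_trans (connect1 (keep _ _ zu1 zl _ _ Tzy)) (IH y Tp' Uy lst _ _).
  - by apply/eqP.
  - by apply/eqP.
  - by apply/eqP.
  - by apply/eqP.
have Cw : connect T' w x.
  move/connectP: (Tc w x) => [p pp lp]; move: lp.
  case: (shortenP pp) => p' pp' up' _ lp'.
  by apply: UP pp' up' (esym lp') wl w1.
have cs := sym_connect_sym T's.
have cx1 : connect T' x u1 by apply: connect_trans (connect1 T'w1); rewrite cs.
have cx2 : connect T' x u2 by apply: connect1.
have cxw : connect T' x w by rewrite cs.
have cxl : connect T' x l by apply: connect_trans cx1 (connect1 T'1l).
have via : forall s t, connect T' x s -> connect T' x t -> connect T' s t.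
  by move=> s t h1 h2; apply: connect_trans h2; rewrite cs.
have sub : subrel T (connect T').
  move=> a c Tac; case: (boolP (R a c)) => hR; last by apply: connect1; rewrite /T' Tac hR.
  move: hR; rewrite /R /e_is => /or3P[] /orP[] /andP[/eqP -> /eqP ->]; apply: via => //; exact: connect0.
have Tc' : forall u v, connect T' u v.
  by move=> u v; apply: via; apply: connect_sub sub _ _ (Tc x _).
have Te' : #|edge_set T'| = n.-1.
  have := handshake T's T'i; rewrite (eq_bigr _ (fun a _ => degE a)) hs.
  by move/eqP; rewrite eqn_pmul2l // => /eqP.
have CT' : in_CTstar bb T'.
  split; first by split.
    by move=> v; rewrite degE.
  by rewrite -Tb /num_branching; apply: eq_card => v; rewrite !inE /branching degE.
pose F a b := deg T a * deg T b.
have Fs : forall a b, F a b = F b a by move=> a b; rewrite /F mulnC.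
have M2T' : M2 T' = \sum_(e in edge_set T') F e.1 e.2.
  by apply: eq_bigr => e _; rewrite !degE.
have M2T : M2 T = \sum_(e in edge_set T) F e.1 e.2 by [].
have H : \sum_a \sum_b (T' a b : nat) * F a b + (\sum_a \sum_b e_is a b x u1 * F a b
     + \sum_a \sum_b e_is a b u1 u2 * F a b + \sum_a \sum_b e_is a b w l * F a b)
   = \sum_a \sum_b (T a b : nat) * F a b + (\sum_a \sum_b e_is a b x u2 * F a b
     + \sum_a \sum_b e_is a b w u1 * F a b + \sum_a \sum_b e_is a b u1 l * F a b).
  rewrite -!sum2_split; apply: eq_bigr => a _; apply: eq_bigr => b _.
  by have := congr1 (muln^~ (F a b)) (PW a b); rewrite /= !mulnDl.
have l1' : u1 != l by rewrite eq_sym.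
rewrite !e_dbl // in H.
rewrite (double_sum (F := F) T's T'i Fs) (double_sum (F := F) Ts Ti Fs) in H.
rewrite -M2T' -M2T /F d1 dl in H.
move: H.
move/(arith2 d0 d2 dw) => [le lt].
exists T'; split => //; first by move=> e; exact: lt (d2s e).
move=> rn; split => //.
- rewrite /= T'x2 /=.
  apply: (sub_in_path (P := [pred v | (v != u1) && (v != l)])).
  + move=> a c; rewrite !inE => /andP[a1 al] /andP[c1 cl]; exact: keep.
  + apply/allP => v vin; rewrite inE; apply/andP; split.
      apply/negP => /eqP e; move: vin; rewrite e inE => /orP[/eqP e'|h].
        by rewrite e' eqxx in u12.
      by rewrite h in u1r.
    by apply/negP => /eqP e; move: (onp v vin); rewrite e dl.
  + exact: Tp.
- by rewrite /= inE negb_or x2 xr.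
- by rewrite /branching /= !degE; apply/andP; split.
- by move: Hall; rewrite /=; apply: sub_all => v; rewrite degE.
Qed.

Theorem lemma10 (n b : nat) (T : rel 'I_n) :
  (1 <= b)%N -> (2 * b + 2 < n)%N ->
  in_CTstar b T ->
  (forall T' : rel 'I_n, in_CTstar b T' -> (M2 T' <= M2 T)%N) ->
  forall (x : 'I_n) (p : seq 'I_n), internal_path T x p -> (size p <= 1)%N.
Proof.
move=> _ _ CT Hmax x p.
have main : forall k (T0 : rel 'I_n) x0 p0, size p0 <= k -> in_CTstar b T0 ->
    (forall T' : rel 'I_n, in_CTstar b T' -> M2 T' <= M2 T0) -> internal_path T0 x0 p0 -> size p0 <= 1.
  elim=> [|k IH] T0 x0 p0 hs CT0 Hm ip; first by move: hs; rewrite leqn0 => /eqP ->.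
  case: p0 hs ip => [|u1 [|u2 rest]] //= hs ip.
  have [T' [CT' le lt ip']] := step CT0 ip.
  case: (rest =P [::]) => [e|ne].
    by have := lt e; have := Hm T' CT'; move=> h1 h2; move: (leq_trans h2 h1); rewrite ltnn.
  have Hm' : forall T'' : rel 'I_n, in_CTstar b T'' -> M2 T'' <= M2 T'.
    by move=> T'' h; exact: leq_trans (Hm T'' h) le.
  have := IH T' x0 (u2 :: rest) hs CT' Hm' (ip' (introN eqP ne)).
  by case: (rest) ne.
exact: main (size p) T x p (leqnn _) CT Hmax.
Qed.
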